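(* Under the standing setup, fix a neighborhood $n$ with $p_n>0$ and $X_n\in(0,1)$, and let $\delta_{B,n}=\mathrm{Cov}(Y,X\mid N=n)$. (i) If $\delta_{B,n}\ge0$, then $D_n\in[0,D^+_{MOB,n}]$, $Y^1_n\in[Y_n,Y^{1+}_{MOB,n}]$ and $Y^0_n\in[Y^{0-}_{MOB,n},Y_n]$. (ii) If $\delta_{B,n}\le0$, then $D_n\in[D^-_{MOB,n},0]$, $Y^1_n\in[Y^{1-}_{MOB,n},Y_n]$ and $Y^0_n\in[Y_n,Y^{0+}_{MOB,n}]$. (iii) Each of these bounds is sharp under the respective sign assumption (absent additional information).
   Context: Let $(X,Y,N)$ be a random triple with $X\in\{0,1\}$, $Y$ real-valued, $N$ taking values in a finite set $\mathcal N$. Write $p_n=\Pr(N=n)$, $X_n=\mathbb E[X\mid N=n]$, $Y_n=\mathbb E[Y\mid N=n]$. Fix reals $\underline Y\le\overline Y$ and assume $\mathbb E[Y\mid X=x,N=n]\in[\underline Y,\overline Y]$ whenever $\Pr(X=x,N=n)>0$. Neighborhood group means $Y^x_n=\mathbb E[Y\mid X=x,N=n]$ and $D_n=Y^1_n-Y^0_n$. Neighborhood method-of-bounds quantities: $Y^{1+}_{MOB,n}=\min\{(Y_n-\underline Y(1-X_n))/X_n,\overline Y\}$, $Y^{0-}_{MOB,n}=\max\{(Y_n-\overline Y X_n)/(1-X_n),\underline Y\}$, $Y^{1-}_{MOB,n}=\max\{(Y_n-\overline Y(1-X_n))/X_n,\underline Y\}$, $Y^{0+}_{MOB,n}=\min\{(Y_n-\underline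 Y X_n)/(1-X_n),\overline Y\}$, $D^+_{MOB,n}=Y^{1+}_{MOB,n}-Y^{0-}_{MOB,n}$, $D^-_{MOB,n}=Y^{1-}_{MOB,n}-Y^{0+}_{MOB,n}$. Sharpness under an assumption $\mathcal A$: the parameter lies in the interval for every joint distribution satisfying the standing assumptions and $\mathcal A$, and every value in the interval is attained by some joint distribution of $(X,Y,N)$ with the same observed $(p_m,X_m,Y_m)_{m\in\mathcal N}$, satisfying the standing bound and $\mathcal A$. *)

(* Defs.v *)
From HB Require Import structures.
From mathcomp Require Import all_boot all_order all_algebra.
From mathcomp Require Import all_classical all_reals all_analysis.
Set Implicit Arguments. Unset Strict Implicit. Unset Printing Implicit Defensive.
Import Order.TTheory GRing.Theory Num.Theory.
Local Open Scope classical_set_scope.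
Local Open Scope ring_scope.

Section Defs.
Context {R : realType} {d : measure_display} {T : measurableType d}
        {I : finType}.
Variable (P : probability T R).

Definition nbhd (N : T -> I) (m : I) : set T := N @^-1` [set m].
Definition cell (X : T -> bool) (N : T -> I) (x : bool) (m : I) : set T :=
  nbhd N m `&` X @^-1` [set x].

Definition pr (A : set T) : R := fine (P A).
Definition cmean (A : set T) (f : T -> R) : R :=
  fine (\int[P]_(w in A) (f w)%:E) / pr A.

Definition p_obs (N : T -> I) m := pr (nbhd N m).
Definition X_obs (X : T -> bool) (N : T -> I) m :=
  cmean (nbhd N m) (fun w => (X w)%:R).
Definition Y_obs (Y : T -> R) (N : T -> I) m := cmean (nbhd N m) Y.

Definition Ygrp (X : T -> bool) (Y : T -> R) (N : T -> I) x m :=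
  cmean (cell X N x m) Y.
Definition Dgrp X Y N m := Ygrp X Y N true m - Ygrp X Y N false m.

Definition deltaB (X : T -> bool) (Y : T -> R) (N : T -> I) m :=
  cmean (nbhd N m) (fun w => Y w * (X w)%:R) - Y_obs Y N m * X_obs X N m.

Definition standing (X : T -> bool) (Y : T -> R) (N : T -> I) (Ylo Yhi : R) :=
  [/\ (forall m, measurable (nbhd N m)),
      measurable (X @^-1` [set true]),
      measurable_fun setT Y,
      P.-integrable setT (EFin \o Y) &
      forall x m, 0 < pr (cell X N x m) ->
        Ylo <= Ygrp X Y N x m <= Yhi].
End Defs.

Definition same_obs {R : realType} {d d' : measure_display}
  {T : measurableType d} {T' : measurableType d'} {I : finType}
  (P : probability T R) (X : T -> bool) (Y : T -> R) (N : T -> I)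
  (P' : probability T' R) (X' : T' -> bool) (Y' : T' -> R) (N' : T' -> I) :=
  forall m, [/\ p_obs P' N' m = p_obs P N m,
               X_obs P' X' N' m = X_obs P X N m &
               Y_obs P' Y' N' m = Y_obs P Y N m].

Section MOB.
Context {R : realType}.
Variables (Ylo Yhi Xn Yn : R).
Definition Y1p_MOB : R := Num.min ((Yn - Ylo * (1 - Xn)) / Xn) Yhi.
Definition Y0m_MOB : R := Num.max ((Yn - Yhi * Xn) / (1 - Xn)) Ylo.
Definition Y1m_MOB : R := Num.max ((Yn - Yhi * (1 - Xn)) / Xn) Ylo.
Definition Y0p_MOB : R := Num.min ((Yn - Ylo * Xn) / (1 - Xn)) Yhi.
Definition Dp_MOB : R := Y1p_MOB - Y0m_MOB.
Definition Dm_MOB : R := Y1m_MOB - Y0p_MOB.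
End MOB.

(* Main.v *)
Require Import Defs.
From HB Require Import structures.
From mathcomp Require Import all_boot all_order all_algebra.
From mathcomp Require Import all_classical all_reals all_analysis.
From mathcomp Require Import ring lra measurable_realfun.
Import Order.TTheory GRing.Theory Num.Theory.
Local Open Scope classical_set_scope.
Local Open Scope ring_scope.
Section M.
Context (R : realType) (d : measure_display) (T : measurableType d) (I : finType)
  (P : probability T R).
Variables (X : T -> bool) (N : T -> I).
Hypothesis mN : forall m, measurable (nbhd N m).
Hypothesis mX : measurable (X @^-1` [set true]).

Lemma mXb b : measurable (X @^-1` [set b]).
Proof.
case: b => //.
rewrite (_ : X @^-1` [set false] = ~` (X @^-1` [set true])); first exact: measurableC.
by apply/seteqP; split => w /=; case: (X w).
Qed.

Lemma mcell x m : measurable (cell X N x m).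
Proof. by apply: measurableI; [exact: mN | exact: mXb]. Qed.

Lemma nbhd_split m : nbhd N m = cell X N true m `|` cell X N false m.
Proof.
apply/seteqP; split => w /=.
  by rewrite /cell /=; case: (X w) => h; [left|right].
by rewrite /cell /= => -[[]|[]].
Qed.

Lemma cell_int m : cell X N true m `&` cell X N false m = set0.
Proof.
apply/seteqP; split => w //= [[_ h1] [_ h2]]; by move: h1 h2 => /= ->.
Qed.

Lemma cell_disj m : [disjoint cell X N true m & cell X N false m].
Proof. exact/disj_set2P/cell_int. Qed.

Lemma int_split (f : T -> \bar R) (m : I) : measurable_fun setT f ->
  (\int[P]_(w in nbhd N m) f w =
   \int[P]_(w in cell X N true m) f w + \int[P]_(w in cell X N false m) f w)%E.
Proof.
move=> mf; rewrite {1}nbhd_split integral_setU //; try exact: mcell.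
  exact: measurable_funS mf.
exact: cell_disj.
Qed.

Lemma Pfin {A : set T} : measurable A -> P A = (pr P A)%:E.
Proof. by move=> mA; rewrite /pr fineK // fin_num_measure. Qed.

Lemma pr_split m : pr P (nbhd N m) = pr P (cell X N true m) + pr P (cell X N false m).
Proof.
have := @measureU _ _ _ P _ _ (mcell true m) (mcell false m).
rewrite -nbhd_split => /(_ (cell_int m)) h.
by rewrite /pr h fineD // fin_num_measure //; exact: mcell.
Qed.

Lemma int_const_on (A : set T) (f : T -> \bar R) (c : R) : measurable A ->
  (forall w, A w -> f w = c%:E) ->
  (\int[P]_(w in A) f w = (c * pr P A)%:E)%E.
Proof.
move=> mA hf; rewrite (eq_integral (fun _ => c%:E)); last first.
  by move=> w; rewrite inE => /hf.
by rewrite (integral_cst P mA c%:E) EFinM /pr fineK // fin_num_measure.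
Qed.

Lemma mXfun : measurable_fun setT X.
Proof. by apply: (measurable_fun_bool true); rewrite setTI. Qed.

Lemma int_X m :
  (\int[P]_(w in nbhd N m) ((X w)%:R : R)%:E = (pr P (cell X N true m))%:E)%E.
Proof.
rewrite int_split.
  rewrite (@int_const_on _ _ 1 (mcell true m)); last by move=> w [_ /= ->].
  rewrite (@int_const_on _ _ 0 (mcell false m)); last by move=> w [_ /= ->].
  by rewrite mul0r mul1r adde0.
apply: measurableT_comp => //.
rewrite (_ : (fun w => ((X w)%:R : R)) = (fun w => if X w then 1 else 0)).
  by apply: measurable_fun_ifT => //; exact: mXfun.
by apply/funext => w; case: (X w).
Qed.

Variables (Y : T -> R).
Hypothesis mY : measurable_fun setT Y.
Hypothesis iY : P.-integrable setT (EFin \o Y).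

Lemma int_Y_fin (A : set T) : measurable A ->
  (\int[P]_(w in A) (Y w)%:E)%E \is a fin_num.
Proof.
move=> mA; apply: (integrable_fin_num mA).
exact: (integrableS measurableT mA (@subsetT _ A) iY).
Qed.

Lemma int_Y_cell x m : 0 < pr P (cell X N x m) ->
  (\int[P]_(w in cell X N x m) (Y w)%:E = (Ygrp P X Y N x m * pr P (cell X N x m))%:E)%E.
Proof.
move=> hp; rewrite /Ygrp /cmean divfK ?gt_eqF // fineK //.
exact/int_Y_fin/mcell.
Qed.

Lemma int_YX m : 0 < pr P (cell X N true m) ->
  (\int[P]_(w in nbhd N m) (Y w * (X w)%:R)%:E =
   (Ygrp P X Y N true m * pr P (cell X N true m))%:E)%E.
Proof.
move=> hp; rewrite int_split.
  rewrite (@int_const_on _ (fun w => (Y w * (X w)%:R)%:E) 0 (mcell false m)); last first.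
    by move=> w [_ /= ->]; rewrite mulr0.
  rewrite mul0r adde0 -int_Y_cell //; apply: eq_integral => w.
  by rewrite inE => -[_ /= ->]; rewrite mulr1.
apply: measurableT_comp => //; apply: measurable_funM => //.
rewrite (_ : (fun w => ((X w)%:R : R)) = (fun w => if X w then 1 else 0)).
  by apply: measurable_fun_ifT => //; exact: mXfun.
by apply/funext => w; case: (X w).
Qed.

Lemma int_Y_nbhd m : 0 < pr P (cell X N true m) -> 0 < pr P (cell X N false m) ->
  fine (\int[P]_(w in nbhd N m) (Y w)%:E)%E =
   Ygrp P X Y N true m * pr P (cell X N true m) +
   Ygrp P X Y N false m * pr P (cell X N false m).
Proof.
move=> h1 h0; rewrite int_split; last exact: measurableT_comp.
by rewrite !int_Y_cell.
Qed.

Section Model.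
Variables (n : I) (a b : R).
Definition Ym w := if N w == n then (if X w then a else b) else Y w.

Lemma mNeq : measurable_fun setT (fun w => N w == n).
Proof.
apply: (measurable_fun_bool true); rewrite setTI.
rewrite (_ : _ @^-1` _ = nbhd N n); first exact: mN.
apply/seteqP; split => w /= h; [exact/eqP|apply/eqP; exact: h].
Qed.

Lemma mYm : measurable_fun setT Ym.
Proof.
apply: measurable_fun_ifT => //; first exact: mNeq.
by apply: measurable_fun_ifT => //; exact: mXfun.
Qed.

Lemma iYm : P.-integrable setT (EFin \o Ym).
Proof.
apply: (le_integrable (g := fun w => (`|Y w| + (`|a| + `|b|))%:E) measurableT).
- exact: measurableT_comp mYm.
- move=> w _ /=; rewrite lee_fin [X in _ <= X]ger0_norm; last by rewrite !addr_ge0.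
  have := normr_ge0 (Y w); have := normr_ge0 a; have := normr_ge0 b.
  by rewrite /Ym; case: (N w == n); [case: (X w)|]; lra.
- have h1 := integrable_norm iY.
  have h2 := @finite_measure_integrable_cst _ _ _ P setT (`|a| + `|b|) measurableT.
  exact: (integrableD measurableT h1 h2).
Qed.
End Model.
End M.

Section M2.
Context (R : realType) (d : measure_display) (T : measurableType d) (I : finType)
  (P : probability T R).
Variables (X : T -> bool) (N : T -> I) (Y : T -> R).
Hypothesis mN : forall m, measurable (nbhd N m).
Hypothesis mX : measurable (X @^-1` [set true]).
Hypothesis mY : measurable_fun setT Y.
Hypothesis iY : P.-integrable setT (EFin \o Y).
Variable (n : I).

Let mc x m := @mcell d T I X N mN mX x m.
Let p1 := pr P (cell X N true n).
Let p0 := pr P (cell X N false n).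
Let p := pr P (nbhd N n).

Lemma Xobs_eq : X_obs P X N n = p1 / p.
Proof. by rewrite /X_obs /cmean (int_X _ _ _ _ P _ _ mN mX n). Qed.

Lemma p_eq : p = p1 + p0.
Proof. exact: (pr_split _ _ _ _ P _ _ mN mX n). Qed.

Lemma cells_pos : 0 < p_obs P N n -> 0 < X_obs P X N n < 1 -> 0 < p1 /\ 0 < p0.
Proof.
rewrite /p_obs -/p Xobs_eq => hp /andP[h1 h2].
have e : p1 = (p1 / p) * p by rewrite divfK ?gt_eqF.
have := p_eq; split; nra.
Qed.

Lemma orig_facts : 0 < p_obs P N n -> 0 < X_obs P X N n < 1 ->
  Y_obs P Y N n = X_obs P X N n * Ygrp P X Y N true n +
                  (1 - X_obs P X N n) * Ygrp P X Y N false n /\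
  cmean P (nbhd N n) (fun w => Y w * (X w)%:R) =
     X_obs P X N n * Ygrp P X Y N true n.
Proof.
move=> hp hx; have [h1 h0] := cells_pos hp hx.
have hp' : p != 0 by rewrite p_eq gt_eqF // addr_gt0.
rewrite Xobs_eq; split.
  rewrite /Y_obs /cmean (int_Y_nbhd _ _ _ _ P _ _ mN mX _ mY iY _ h1 h0) -/p -/p1 -/p0.
  move: hp'; rewrite p_eq; generalize (Ygrp P X Y N true n) (Ygrp P X Y N false n) p1 p0 => y1 y0 q1 q0 hq; by field.
rewrite /cmean /= (int_YX _ _ _ _ P _ _ mN mX _ mY iY _ h1) /= -/p -/p1.
by move: hp'; generalize (Ygrp P X Y N true n) p1 p => y1 q1 q hq; field.
Qed.

Variables (a b : R).
Local Notation Y' := (Ym R d T I X N Y n a b).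
Let mY' : measurable_fun setT Y' := mYm R d T I X N mN mX Y mY n a b.
Let iY' : P.-integrable setT (EFin \o Y') := iYm R d T I P X N mN mX Y mY iY n a b.

Lemma Y'_off (A : set T) m : m != n -> A `<=` nbhd N m ->
  (\int[P]_(w in A) (Y' w)%:E = \int[P]_(w in A) (Y w)%:E)%E.
Proof.
move=> hm hA; apply: eq_integral => w; rewrite inE => /hA hw.
by rewrite /Ym hw (negbTE hm).
Qed.

Lemma Ygrp_off x m : m != n -> Ygrp P X Y' N x m = Ygrp P X Y N x m.
Proof. by move=> hm; rewrite /Ygrp /cmean (Y'_off _ _ hm) // => w []. Qed.

Lemma Yobs_off m : m != n -> Y_obs P Y' N m = Y_obs P Y N m.
Proof. by move=> hm; rewrite /Y_obs /cmean (Y'_off _ _ hm). Qed.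

Lemma Ygrp_on x : 0 < pr P (cell X N x n) ->
  Ygrp P X Y' N x n = if x then a else b.
Proof.
move=> hp; rewrite /Ygrp /cmean (int_const_on _ _ _ P _ _ (if x then a else b) (mc x n)).
  by rewrite /= mulfK ?gt_eqF.
by move=> w [/= hN hX]; rewrite /Ym hN eqxx hX.
Qed.

Lemma Yobs_on : 0 < p1 -> 0 < p0 ->
  Y_obs P Y' N n = (a * p1 + b * p0) / p.
Proof.
move=> h1 h0; rewrite /Y_obs /cmean (int_Y_nbhd _ _ _ _ P _ _ mN mX _ mY' iY' _ h1 h0).
by rewrite !Ygrp_on.
Qed.

Lemma YX_on : 0 < p1 ->
  cmean P (nbhd N n) (fun w => Y' w * (X w)%:R) = a * p1 / p.
Proof.
move=> h1; rewrite /cmean /= (int_YX _ _ _ _ P _ _ mN mX _ mY' iY' _ h1) /=.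
by rewrite Ygrp_on.
Qed.

Lemma model (Ylo Yhi : R) : 0 < p_obs P N n -> 0 < X_obs P X N n < 1 ->
  (forall x m, 0 < pr P (cell X N x m) -> Ylo <= Ygrp P X Y N x m <= Yhi) ->
  Ylo <= a <= Yhi -> Ylo <= b <= Yhi ->
  X_obs P X N n * a + (1 - X_obs P X N n) * b = Y_obs P Y N n ->
  [/\ standing P X Y' N Ylo Yhi, same_obs P X Y N P X Y' N,
      deltaB P X Y' N n = X_obs P X N n * (a - Y_obs P Y N n),
      Ygrp P X Y' N true n = a & Ygrp P X Y' N false n = b].
Proof.
move=> hp hx hb ha hb' hab; have [h1 h0] := cells_pos hp hx.
have hp' : p != 0 by rewrite p_eq gt_eqF // addr_gt0.
have hYobs : Y_obs P Y' N n = Y_obs P Y N n.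
  rewrite Yobs_on // -hab Xobs_eq.
  by move: hp'; rewrite p_eq; generalize p1 p0 => q1 q0 hq; field.
split.
- split; [exact: mN|exact: mX|exact: mY'|exact: iY'|].
  move=> x m hpos; case: (eqVneq m n) => [e|hm].
    by subst m; rewrite Ygrp_on //; case: x {hpos}.
  by rewrite Ygrp_off //; exact: hb.
- move=> m; split => //.
  have [->|hm] := eqVneq m n; first exact: hYobs.
  exact: Yobs_off.
- rewrite /deltaB YX_on // hYobs Xobs_eq.
  by move: hp'; generalize p1 p (Y_obs P Y N n) => q1 q y hq; field.
- exact: Ygrp_on.
- exact: Ygrp_on.
Qed.
End M2.

Section Alg.
Context (R : realType).
Variables (Ylo Yhi x yn : R).
Hypothesis hx0 : 0 < x.
Hypothesis hx1 : x < 1.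

Lemma divE (u w : R) : 0 < w -> exists q, q = u / w /\ q * w = u.
Proof. by move=> hw; exists (u / w); split => //; rewrite divfK ?gt_eqF. Qed.

Lemma sgn (z w u : R) : 0 < w -> z * w = u -> 0 <= u -> 0 <= z.
Proof. by move=> hw <-; rewrite pmulr_lge0. Qed.

Lemma alg_i (y1 y0 : R) : Ylo <= y1 <= Yhi -> Ylo <= y0 <= Yhi ->
  yn = x * y1 + (1 - x) * y0 -> y0 <= y1 ->
  [/\ 0 <= y1 - y0 <= Dp_MOB Ylo Yhi x yn, yn <= y1 <= Y1p_MOB Ylo Yhi x yn &
      Y0m_MOB Ylo Yhi x yn <= y0 <= yn].
Proof.
move=> /andP[l1 u1] /andP[l0 u0] e h; have h01 := @ltr01 R.
have hx1' : 0 < 1 - x by rewrite subr_gt0.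
have [A [eA hA]] := divE (yn - Ylo * (1 - x)) x hx0.
have [B [eB hB]] := divE (yn - Yhi * x) (1 - x) hx1'.
rewrite /Dp_MOB /Y1p_MOB /Y0m_MOB -eA -eB; clear eA eB.
have c1 : 0 <= A - y1.
  apply: (@sgn _ x ((1 - x) * (y0 - Ylo)) hx0); last by apply: mulr_ge0; [exact: ltW|rewrite subr_ge0].
  by rewrite mulrBl hA e; ring.
have c2 : 0 <= y0 - B.
  apply: (@sgn _ (1 - x) (x * (Yhi - y1)) hx1'); last by apply: mulr_ge0; [exact: ltW|rewrite subr_ge0].
  by rewrite mulrBl hB e; ring.
have c3 : y1 <= Num.min A Yhi by rewrite le_min u1 andbT; lra.
have c4 : Num.max B Ylo <= y0 by rewrite ge_max l0 andbT; lra.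
have c5 : 0 <= (1 - x) * (y1 - y0) by apply: mulr_ge0; [exact: ltW|rewrite subr_ge0].
have c6 : 0 <= x * (y1 - y0) by apply: mulr_ge0; [exact: ltW|rewrite subr_ge0].
split; apply/andP; split; try lra.
Qed.

Lemma alg_ii (y1 y0 : R) : Ylo <= y1 <= Yhi -> Ylo <= y0 <= Yhi ->
  yn = x * y1 + (1 - x) * y0 -> y1 <= y0 ->
  [/\ Dm_MOB Ylo Yhi x yn <= y1 - y0 <= 0, Y1m_MOB Ylo Yhi x yn <= y1 <= yn &
      yn <= y0 <= Y0p_MOB Ylo Yhi x yn].
Proof.
move=> /andP[l1 u1] /andP[l0 u0] e h; have h01 := @ltr01 R.
have hx1' : 0 < 1 - x by rewrite subr_gt0.
have [A [eA hA]] := divE (yn - Yhi * (1 - x)) x hx0.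
have [B [eB hB]] := divE (yn - Ylo * x) (1 - x) hx1'.
rewrite /Dm_MOB /Y1m_MOB /Y0p_MOB -eA -eB; clear eA eB.
have c1 : 0 <= y1 - A.
  apply: (@sgn _ x ((1 - x) * (Yhi - y0)) hx0); last by apply: mulr_ge0; [exact: ltW|rewrite subr_ge0].
  by rewrite mulrBl hA e; ring.
have c2 : 0 <= B - y0.
  apply: (@sgn _ (1 - x) (x * (y1 - Ylo)) hx1'); last by apply: mulr_ge0; [exact: ltW|rewrite subr_ge0].
  by rewrite mulrBl hB e; ring.
have c3 : Num.max A Ylo <= y1 by rewrite ge_max l1 andbT; lra.
have c4 : y0 <= Num.min B Yhi by rewrite le_min u0 andbT; lra.
have c5 : 0 <= (1 - x) * (y0 - y1) by apply: mulr_ge0; [exact: ltW|rewrite subr_ge0].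
have c6 : 0 <= x * (y0 - y1) by apply: mulr_ge0; [exact: ltW|rewrite subr_ge0].
split; apply/andP; split; try lra.
Qed.

Lemma pm {u w : R} : 0 < u -> 0 <= w -> 0 <= u * w.
Proof. by move=> hu hw; apply: mulr_ge0 => //; exact: ltW. Qed.

Definition good (a b : R) := [/\ Ylo <= a <= Yhi, Ylo <= b <= Yhi &
  x * a + (1 - x) * b = yn].

Hypothesis hyn : Ylo <= yn <= Yhi.

Lemma s1 v : 0 <= v <= Dp_MOB Ylo Yhi x yn ->
  exists a b, [/\ good a b, 0 <= x * (a - yn) & a - b = v].
Proof.
move: hyn => /andP[ly uy] /andP[lv uv]; have h01 := @ltr01 R.
have hx1' : 0 < 1 - x by rewrite subr_gt0.
have [A [eA hA]] := divE (yn - Ylo * (1 - x)) x hx0.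
have [B [eB hB]] := divE (yn - Yhi * x) (1 - x) hx1'.
move: uv; rewrite /Dp_MOB /Y1p_MOB /Y0m_MOB -eA -eB => uv; clear eA eB.
have m1 : Num.min A Yhi <= A by rewrite ge_min lexx.
have m2 : Num.min A Yhi <= Yhi by rewrite ge_min lexx orbT.
have m3 : B <= Num.max B Ylo by rewrite le_max lexx.
have m4 : Ylo <= Num.max B Ylo by rewrite le_max lexx orbT.
have v1 : 0 <= A - Ylo - v by lra.
have v2 : 0 <= Yhi - B - v by lra.
have k1 := pm hx1' v2.
have k2 := pm hx0 v1.
have k3 := pm hx1' lv.
have k4 := pm hx0 lv.
exists (yn + (1 - x) * v), (yn - x * v); split; [split| |].
- apply/andP; split; lra.
- apply/andP; split; lra.
- ring.
- by apply: pm => //; lra.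
- ring.
Qed.

Lemma s2 v : yn <= v <= Y1p_MOB Ylo Yhi x yn ->
  exists a b, [/\ good a b, 0 <= x * (a - yn) & a = v].
Proof.
move: hyn => /andP[ly uy] /andP[lv uv]; have h01 := @ltr01 R.
have hx1' : 0 < 1 - x by rewrite subr_gt0.
have [A [eA hA]] := divE (yn - Ylo * (1 - x)) x hx0.
have [q [eq hq]] := divE (yn - x * v) (1 - x) hx1'.
move: uv; rewrite /Y1p_MOB -eA le_min => /andP[v1 v2]; clear eA eq.
have c1 : 0 <= q - Ylo.
  apply: (@sgn _ (1 - x) (x * (A - v)) hx1'); first lra.
  by apply: pm => //; lra.
have c2 : 0 <= yn - q.
  apply: (@sgn _ (1 - x) (x * (v - yn)) hx1'); first lra.
  by apply: pm => //; lra.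
exists v, q; split; [split| |].
- apply/andP; split; lra.
- apply/andP; split; lra.
- lra.
- by apply: pm => //; lra.
- by [].
Qed.

Lemma s3 v : Y0m_MOB Ylo Yhi x yn <= v <= yn ->
  exists a b, [/\ good a b, 0 <= x * (a - yn) & b = v].
Proof.
move: hyn => /andP[ly uy] /andP[lv uv]; have h01 := @ltr01 R.
have hx1' : 0 < 1 - x by rewrite subr_gt0.
have [B [eB hB]] := divE (yn - Yhi * x) (1 - x) hx1'.
have [q [eq hq]] := divE (yn - (1 - x) * v) x hx0.
move: lv; rewrite /Y0m_MOB -eB ge_max => /andP[v1 v2]; clear eB eq.
have c1 : 0 <= q - yn.
  apply: (@sgn _ x ((1 - x) * (yn - v)) hx0); first lra.
  by apply: pm => //; lra.
have c2 : 0 <= Yhi - q.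
  apply: (@sgn _ x ((1 - x) * (v - B)) hx0); first lra.
  by apply: pm => //; lra.
exists q, v; split; [split| |].
- apply/andP; split; lra.
- apply/andP; split; lra.
- lra.
- by apply: pm => //; lra.
- by [].
Qed.

Lemma s4 v : Dm_MOB Ylo Yhi x yn <= v <= 0 ->
  exists a b, [/\ good a b, x * (a - yn) <= 0 & a - b = v].
Proof.
move: hyn => /andP[ly uy] /andP[lv uv]; have h01 := @ltr01 R.
have hx1' : 0 < 1 - x by rewrite subr_gt0.
have [A [eA hA]] := divE (yn - Yhi * (1 - x)) x hx0.
have [B [eB hB]] := divE (yn - Ylo * x) (1 - x) hx1'.
move: lv; rewrite /Dm_MOB /Y1m_MOB /Y0p_MOB -eA -eB => lv; clear eA eB.
have m1 : A <= Num.max A Ylo by rewrite le_max lexx.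
have m2 : Ylo <= Num.max A Ylo by rewrite le_max lexx orbT.
have m3 : Num.min B Yhi <= B by rewrite ge_min lexx.
have m4 : Num.min B Yhi <= Yhi by rewrite ge_min lexx orbT.
have v1 : 0 <= v - A + Yhi by lra.
have v2 : 0 <= v - Ylo + B by lra.
have nv : 0 <= - v by lra.
have k1 := pm hx1' v2.
have k2 := pm hx0 v1.
have k3 := pm hx1' nv.
have k4 := pm hx0 nv.
exists (yn + (1 - x) * v), (yn - x * v); split; [split| |].
- apply/andP; split; lra.
- apply/andP; split; lra.
- ring.
- have : 0 <= x * ((1 - x) * - v) by apply: pm.
  lra.
- ring.
Qed.

Lemma s5 v : Y1m_MOB Ylo Yhi x yn <= v <= yn ->
  exists a b, [/\ good a b, x * (a - yn) <= 0 & a = v].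
Proof.
move: hyn => /andP[ly uy] /andP[lv uv]; have h01 := @ltr01 R.
have hx1' : 0 < 1 - x by rewrite subr_gt0.
have [A [eA hA]] := divE (yn - Yhi * (1 - x)) x hx0.
have [q [eq hq]] := divE (yn - x * v) (1 - x) hx1'.
move: lv; rewrite /Y1m_MOB -eA ge_max => /andP[v1 v2]; clear eA eq.
have c1 : 0 <= q - yn.
  apply: (@sgn _ (1 - x) (x * (yn - v)) hx1'); first lra.
  by apply: pm => //; lra.
have c2 : 0 <= Yhi - q.
  apply: (@sgn _ (1 - x) (x * (v - A)) hx1'); first lra.
  by apply: pm => //; lra.
exists v, q; split; [split| |].
- apply/andP; split; lra.
- apply/andP; split; lra.
- lra.
- have : 0 <= x * (yn - v) by apply: pm => //; lra.
  lra.
- by [].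
Qed.

Lemma s6 v : yn <= v <= Y0p_MOB Ylo Yhi x yn ->
  exists a b, [/\ good a b, x * (a - yn) <= 0 & b = v].
Proof.
move: hyn => /andP[ly uy] /andP[lv uv]; have h01 := @ltr01 R.
have hx1' : 0 < 1 - x by rewrite subr_gt0.
have [B [eB hB]] := divE (yn - Ylo * x) (1 - x) hx1'.
have [q [eq hq]] := divE (yn - (1 - x) * v) x hx0.
move: uv; rewrite /Y0p_MOB -eB le_min => /andP[v1 v2]; clear eB eq.
have c1 : 0 <= yn - q.
  apply: (@sgn _ x ((1 - x) * (v - yn)) hx0); first lra.
  by apply: pm => //; lra.
have c2 : 0 <= q - Ylo.
  apply: (@sgn _ x ((1 - x) * (B - v)) hx0); first lra.
  by apply: pm => //; lra.
exists q, v; split; [split| |].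
- apply/andP; split; lra.
- apply/andP; split; lra.
- lra.
- have : 0 <= x * (yn - q) by apply: pm => //; lra.
  lra.
- by [].
Qed.

Lemma conv (y1 y0 : R) : Ylo <= y1 <= Yhi -> Ylo <= y0 <= Yhi ->
  Ylo <= x * y1 + (1 - x) * y0 <= Yhi.
Proof.
move=> /andP[l1 u1] /andP[l0 u0]; have h01 := @ltr01 R.
have hx1' : 0 < 1 - x by rewrite subr_gt0.
have k1 : 0 <= x * (y1 - Ylo) by apply: pm => //; lra.
have k2 : 0 <= (1 - x) * (y0 - Ylo) by apply: pm => //; lra.
have k3 : 0 <= x * (Yhi - y1) by apply: pm => //; lra.
have k4 : 0 <= (1 - x) * (Yhi - y0) by apply: pm => //; lra.
apply/andP; split; lra.
Qed.
End Alg.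

Theorem proposition11 (R : realType) (d : measure_display)
  (T : measurableType d) (I : finType) (P : probability T R)
  (X : T -> bool) (Y : T -> R) (N : T -> I) (Ylo Yhi : R) (n : I) :
  Ylo <= Yhi ->
  standing P X Y N Ylo Yhi ->
  0 < p_obs P N n ->
  0 < X_obs P X N n < 1 ->
  let Xn := X_obs P X N n in
  let Yn := Y_obs P Y N n in
  let Y1 := Ygrp P X Y N true n in
  let Y0 := Ygrp P X Y N false n in
  let D := Dgrp P X Y N n in
  let dB := deltaB P X Y N n in
  (* (i) *)
  (0 <= dB ->
     [/\ 0 <= D <= Dp_MOB Ylo Yhi Xn Yn,
         Yn <= Y1 <= Y1p_MOB Ylo Yhi Xn Yn &
         Y0m_MOB Ylo Yhi Xn Yn <= Y0 <= Yn]) /\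
  (* (ii) *)
  (dB <= 0 ->
     [/\ Dm_MOB Ylo Yhi Xn Yn <= D <= 0,
         Y1m_MOB Ylo Yhi Xn Yn <= Y1 <= Yn &
         Yn <= Y0 <= Y0p_MOB Ylo Yhi Xn Yn]) /\
  (* (iii) sharpness under delta_B >= 0 *)
  (0 <= dB ->
     [/\ (forall v, 0 <= v <= Dp_MOB Ylo Yhi Xn Yn ->
            exists (d' : measure_display) (T' : measurableType d')
              (P' : probability T' R) (X' : T' -> bool) (Y' : T' -> R)
              (N' : T' -> I),
              [/\ standing P' X' Y' N' Ylo Yhi, same_obs P X Y N P' X' Y' N',
                  0 <= deltaB P' X' Y' N' n & Dgrp P' X' Y' N' n = v]),
         (forall v, Yn <= v <= Y1p_MOB Ylo Yhi Xn Yn ->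
            exists (d' : measure_display) (T' : measurableType d')
              (P' : probability T' R) (X' : T' -> bool) (Y' : T' -> R)
              (N' : T' -> I),
              [/\ standing P' X' Y' N' Ylo Yhi, same_obs P X Y N P' X' Y' N',
                  0 <= deltaB P' X' Y' N' n & Ygrp P' X' Y' N' true n = v]) &
         (forall v, Y0m_MOB Ylo Yhi Xn Yn <= v <= Yn ->
            exists (d' : measure_display) (T' : measurableType d')
              (P' : probability T' R) (X' : T' -> bool) (Y' : T' -> R)
              (N' : T' -> I),
              [/\ standing P' X' Y' N' Ylo Yhi, same_obs P X Y N P' X' Y' N',
                  0 <= deltaB P' X' Y' N' n & Ygrp P' X' Y' N' false n = v])])
  /\
  (* (iii) sharpness under delta_B <= 0 *)
  (dB <= 0 ->
     [/\ (forall v, Dm_MOB Ylo Yhi Xn Yn <= v <= 0 ->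
            exists (d' : measure_display) (T' : measurableType d')
              (P' : probability T' R) (X' : T' -> bool) (Y' : T' -> R)
              (N' : T' -> I),
              [/\ standing P' X' Y' N' Ylo Yhi, same_obs P X Y N P' X' Y' N',
                  deltaB P' X' Y' N' n <= 0 & Dgrp P' X' Y' N' n = v]),
         (forall v, Y1m_MOB Ylo Yhi Xn Yn <= v <= Yn ->
            exists (d' : measure_display) (T' : measurableType d')
              (P' : probability T' R) (X' : T' -> bool) (Y' : T' -> R)
              (N' : T' -> I),
              [/\ standing P' X' Y' N' Ylo Yhi, same_obs P X Y N P' X' Y' N',
                  deltaB P' X' Y' N' n <= 0 & Ygrp P' X' Y' N' true n = v]) &
         (forall v, Yn <= v <= Y0p_MOB Ylo Yhi Xn Yn ->
            exists (d' : measure_display) (T' : measurableType d')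
              (P' : probability T' R) (X' : T' -> bool) (Y' : T' -> R)
              (N' : T' -> I),
              [/\ standing P' X' Y' N' Ylo Yhi, same_obs P X Y N P' X' Y' N',
                  deltaB P' X' Y' N' n <= 0 & Ygrp P' X' Y' N' false n = v])]).
Proof.
move=> hle hs hp hx; cbv zeta.
case: (hs) => mN mX mY iY hb.
have [h1 h0] := cells_pos R d T I P X N mN mX n hp hx.
have [eYn eYX] := orig_facts R d T I P X N Y mN mX mY iY n hp hx.
have b1 := hb true n h1; have b0 := hb false n h0.
have hx' := hx; move: hx' => /andP[hx0 hx1].
rewrite /Dgrp.
set x := X_obs P X N n in eYn eYX hx0 hx1 *.
set yn := Y_obs P Y N n in eYn *.
set y1 := Ygrp P X Y N true n in eYn eYX b1 *.
set y0 := Ygrp P X Y N false n in eYn b0 *.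
have hk : 0 < x * (1 - x) by rewrite mulr_gt0 // subr_gt0.
have edB : deltaB P X Y N n = x * (1 - x) * (y1 - y0).
  by rewrite /deltaB eYX -/yn -/x eYn; ring.
have hyn : Ylo <= yn <= Yhi by rewrite eYn; exact: conv.

have mk : forall a b, @good R Ylo Yhi x yn a b ->
   [/\ standing P X (Ym R d T I X N Y n a b) N Ylo Yhi,
       same_obs P X Y N P X (Ym R d T I X N Y n a b) N,
       deltaB P X (Ym R d T I X N Y n a b) N n = x * (a - yn),
       Ygrp P X (Ym R d T I X N Y n a b) N true n = a &
       Ygrp P X (Ym R d T I X N Y n a b) N false n = b].
  move=> a b [ha hb' hab].
  exact: (model R d T I P X N Y mN mX mY iY n a b Ylo Yhi hp hx hb ha hb' hab).
split; [|split; [|split]].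
- move=> hdB; have hy : y0 <= y1.
    by move: hdB; rewrite edB pmulr_rge0 // subr_ge0.
  exact: (@alg_i R Ylo Yhi x yn hx0 hx1 y1 y0 b1 b0 eYn hy).
- move=> hdB; have hy : y1 <= y0.
    by move: hdB; rewrite edB pmulr_rle0 // subr_le0.
  exact: (@alg_ii R Ylo Yhi x yn hx0 hx1 y1 y0 b1 b0 eYn hy).
- move=> _; split => v hv.
  + have [a [b [g hs' hv']]] := @s1 R Ylo Yhi x yn hx0 hx1 hyn v hv.
    have [st so db g1 g0] := mk a b g.
    exists d, T, P, X, (Ym R d T I X N Y n a b), N; split => //.
      by rewrite db.
    by rewrite ?/Dgrp g1 g0.
  + have [a [b [g hs' hv']]] := @s2 R Ylo Yhi x yn hx0 hx1 hyn v hv.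
    have [st so db g1 g0] := mk a b g.
    exists d, T, P, X, (Ym R d T I X N Y n a b), N; split => //.
      by rewrite db.
    by rewrite g1.
  + have [a [b [g hs' hv']]] := @s3 R Ylo Yhi x yn hx0 hx1 hyn v hv.
    have [st so db g1 g0] := mk a b g.
    exists d, T, P, X, (Ym R d T I X N Y n a b), N; split => //.
      by rewrite db.
    by rewrite g0.
- move=> _; split => v hv.
  + have [a [b [g hs' hv']]] := @s4 R Ylo Yhi x yn hx0 hx1 hyn v hv.
    have [st so db g1 g0] := mk a b g.
    exists d, T, P, X, (Ym R d T I X N Y n a b), N; split => //.
      by rewrite db.
    by rewrite ?/Dgrp g1 g0.
  + have [a [b [g hs' hv']]] := @s5 R Ylo Yhi x yn hx0 hx1 hyn v hv.
    have [st so db g1 g0] := mk a b g.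
    exists d, T, P, X, (Ym R d T I X N Y n a b), N; split => //.
      by rewrite db.
    by rewrite g1.
  + have [a [b [g hs' hv']]] := @s6 R Ylo Yhi x yn hx0 hx1 hyn v hv.
    have [st so db g1 g0] := mk a b g.
    exists d, T, P, X, (Ym R d T I X N Y n a b), N; split => //.
      by rewrite db.
    by rewrite g0.
Qed.
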